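(* Let $G=(V,E)$ be a simple undirected graph with $V=[n]$ such that $|V|=\chi(\bar G)\,\chi(G)$. Then for every integer $k$ with $1\le k\le\chi(G)$, $$\vartheta_k(G)=\vartheta'_k(G)=\theta^1_k(G)=\theta^2_k(G)=\theta^3_k(G)=k\,\alpha(G)=\alpha_k(G).$$
   Context: $\chi(G)$ is the chromatic number of $G$ and $\bar G$ its complement. $\alpha(G)$ is the stability number; $\alpha_k(G)$ is the maximum number of vertices of an induced $k$-colorable subgraph of $G$. $J$ is the all-ones matrix, $\langle A,B\rangle=\mathrm{trace}(AB)$, $\ge0$ entrywise, $\succeq0$ positive semidefinite, $\mathbb S^n$ symmetric $n\times n$ matrices. $\vartheta_k(G)=\max\{\langle J,Z\rangle: Z\in\mathbb S^n,\ Z_{ij}=0\ (\{i,j\}\in E),\ \langle I,Z\rangle=k,\ Z\succeq0,\ I-Z\succeq0\}$, and $\vartheta'_k(G)$ is the same with the additional constraint $Z\ge0$. $\theta^1_k(G)=\max\langle I,Z\rangle$ over $Z,X\in\mathbb S^n$ subject to $Z_{ij}=0$ for $\{i,j\}\in E$; $X_{ii}=0$ for $i\in[n]$; $Z,X\ge0$; $Z-X\succeq0$; $\begin{bmatrix}1&\mathrm{diag}(Z)^{\top}\\ \mathrm{diag}(Z)&Z+(k-1)X\end{bmatrix}\succeq0$; $1-Z_{ii}-Z_{jj}+Z_{ij}+(k-1)X_{ij}\ge0$ for $i>j$; $Z_{ii}-Z_{ij}-(k-1)X_{ij}\ge0$ for $i\ne j$. $\theta^2_k(G)$ is the optimal value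 of the same problem without the last two families of linear inequalities. $\theta^3_k(G)=\max\{\langle I,Z\rangle: Z\in\mathbb S^n,\ Z_{ij}=0\ (\{i,j\}\in E),\ Z_{ii}\le1,\ Z\ge0,\ \begin{bmatrix}k&\mathrm{diag}(Z)^{\top}\\ \mathrm{diag}(Z)&Z\end{bmatrix}\succeq0\}$. *)

(* Defs.v *)
From HB Require Import structures.
From mathcomp Require Import all_boot all_order all_algebra.
From mathcomp Require Import classical_sets reals.
Set Implicit Arguments. Unset Strict Implicit. Unset Printing Implicit Defensive.
Import Order.TTheory GRing.Theory Num.Theory.
Local Open Scope ring_scope.
Local Open Scope classical_set_scope.

Definition simple_graph (n : nat) (e : rel 'I_n) : Prop :=
  symmetric e /\ irreflexive e.

Definition compl_graph (n : nat) (e : rel 'I_n) : rel 'I_n :=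
  [rel i j | (i != j) && ~~ e i j].

Definition proper_on (n k : nat) (e : rel 'I_n) (S : {set 'I_n})
  (f : {ffun 'I_n -> 'I_k}) : bool :=
  [forall i, forall j, ((i \in S) && (j \in S) && e i j) ==> (f i != f j)].

Definition colorable (n : nat) (e : rel 'I_n) (k : nat) : bool :=
  [exists f : {ffun 'I_n -> 'I_k}, proper_on e [set: 'I_n] f].

(* Chromatic number: the least k such that G is k-colorable.  For a loopless
   graph on n vertices, n colors always suffice, so searching in 0..n is exact. *)
Definition chi (n : nat) (e : rel 'I_n) : nat :=
  find (colorable e) (iota 0 n.+1).

Definition stable (n : nat) (e : rel 'I_n) (S : {set 'I_n}) : bool :=
  [forall i, forall j, ((i \in S) && (j \in S)) ==> ~~ e i j].

Definition alpha (n : nat) (e : rel 'I_n) : nat :=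
  \max_(S : {set 'I_n} | stable e S) #|S|.

Definition alpha_k (n : nat) (e : rel 'I_n) (k : nat) : nat :=
  \max_(S : {set 'I_n} | [exists f : {ffun 'I_n -> 'I_k}, proper_on e S f]) #|S|.

Section SDP.
Variable R : realType.

Definition symmx (m : nat) (A : 'M[R]_m) : Prop := A^T = A.

Definition psd (m : nat) (A : 'M[R]_m) : Prop :=
  symmx A /\ forall x : 'cV[R]_m, 0 <= (x^T *m A *m x) 0 0.

Definition nonneg_mx (m : nat) (A : 'M[R]_m) : Prop :=
  forall i j, 0 <= A i j.

Definition zero_on_edges (n : nat) (e : rel 'I_n) (A : 'M[R]_n) : Prop :=
  forall i j, e i j -> A i j = 0.

Definition sum_entries (n : nat) (A : 'M[R]_n) : R := \sum_i \sum_j A i j.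

Definition border (n : nat) (a : R) (d : 'cV[R]_n) (M : 'M[R]_n) : 'M[R]_(1 + n) :=
  block_mx (a%:M) d^T d M.

Definition diagv (n : nat) (Z : 'M[R]_n) : 'cV[R]_n := \col_i Z i i.

Definition vartheta_k (n : nat) (e : rel 'I_n) (k : nat) : R :=
  sup [set v | exists Z : 'M[R]_n,
     [/\ symmx Z, zero_on_edges e Z, \tr Z = k%:R, psd Z & psd (1%:M - Z)]
     /\ v = sum_entries Z].

Definition vartheta'_k (n : nat) (e : rel 'I_n) (k : nat) : R :=
  sup [set v | exists Z : 'M[R]_n,
     [/\ symmx Z, zero_on_edges e Z, \tr Z = k%:R, psd Z & psd (1%:M - Z)]
     /\ nonneg_mx Z
     /\ v = sum_entries Z].

Definition theta1_k (n : nat) (e : rel 'I_n) (k : nat) : R :=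
  sup [set v | exists Z X : 'M[R]_n,
     [/\ symmx Z, symmx X, zero_on_edges e Z & (forall i, X i i = 0)]
     /\ [/\ nonneg_mx Z, nonneg_mx X, psd (Z - X)
       & psd (border 1 (diagv Z) (Z + (k%:R - 1) *: X))]
     /\ [/\ (forall i j : 'I_n, (j < i)%N ->
               0 <= 1 - Z i i - Z j j + Z i j + (k%:R - 1) * X i j)
           & (forall i j : 'I_n, i != j -> 0 <= Z i i - Z i j - (k%:R - 1) * X i j)]
     /\ v = \tr Z].

Definition theta2_k (n : nat) (e : rel 'I_n) (k : nat) : R :=
  sup [set v | exists Z X : 'M[R]_n,
     [/\ symmx Z, symmx X, zero_on_edges e Z & (forall i, X i i = 0)]
     /\ [/\ nonneg_mx Z, nonneg_mx X, psd (Z - X)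
       & psd (border 1 (diagv Z) (Z + (k%:R - 1) *: X))]
     /\ v = \tr Z].

Definition theta3_k (n : nat) (e : rel 'I_n) (k : nat) : R :=
  sup [set v | exists Z : 'M[R]_n,
     [/\ symmx Z, zero_on_edges e Z, (forall i, Z i i <= 1), nonneg_mx Z
       & psd (border k%:R (diagv Z) Z)]
     /\ v = \tr Z].

End SDP.

(* Main.v *)
Require Import Defs.
From HB Require Import structures.
From mathcomp Require Import all_boot all_order all_algebra.
From mathcomp Require Import classical_sets reals.
From mathcomp Require Import ring lra zify.
Import Order.TTheory GRing.Theory Num.Theory.

Local Open Scope ring_scope.

Section LA.
Variable R : realType.

Lemma sup_eq_max (E : set R) x : E x -> (forall y, E y -> y <= x) -> sup E = x.
Proof.
move=> Ex ub; apply/le_anti/andP; split.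
  by apply: ge_sup; [exists x | move=> y /ub].
by apply: sup_upper_bound => //; split; [exists x | exists x => y /ub].
Qed.

Lemma qfE n (A : 'M[R]_n) (x : 'cV[R]_n) :
  (x^T *m A *m x) 0 0 = \sum_i \sum_j x i 0 * A i j * x j 0.
Proof.
rewrite !mxE.
under eq_bigr => j _ do rewrite !mxE big_distrl /=.
rewrite exchange_big /=; apply eq_bigr => i _; apply eq_bigr => j _.
by rewrite !mxE.
Qed.

Lemma borderE n a (d : 'cV[R]_n) M (u : 'cV[R]_1) (y : 'cV[R]_n) :
  ((col_mx u y)^T *m border a d M *m col_mx u y) 0 0 =
  a * u 0 0 ^+ 2 + 2 * u 0 0 * (\sum_i d i 0 * y i 0) + (y^T *m M *m y) 0 0.
Proof.
rewrite /border tr_col_mx mul_row_block mul_row_col !mxE.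
rewrite !big_ord1 !mxE !big_ord1 !mxE /=.
rewrite [X in _ + X = _](eq_bigr (fun j => (u^T *m d^T) 0 j * y j 0 + (y^T *m M) 0 j * y j 0)); last by move=> j _; rewrite [in LHS]mxE mulrDl.
rewrite big_split /=.
have -> : \sum_(j < n) (u^T *m d^T) 0 j * y j 0 = u 0 0 * \sum_i d i 0 * y i 0.
  rewrite mulr_sumr; apply eq_bigr => j _; rewrite !mxE big_ord1 !mxE mulrA //.
have -> : \sum_(j < n) y^T 0 j * d j ord0 = \sum_i d i 0 * y i 0.
  by apply eq_bigr => j _; rewrite !mxE mulrC.
have -> : \sum_(j < n) (y^T *m M) 0 j * y j 0 = (y^T *m M *m y) 0 0.
  by rewrite [in RHS]mxE.
change (ord0 : 'I_1) with (0 : 'I_1).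
rewrite mulr1n; ring.
Qed.

Lemma border_sym n a (d : 'cV[R]_n) M : symmx M -> symmx (border a d M).
Proof. by rewrite /symmx /border tr_block_mx trmxK tr_scalar_mx => ->. Qed.

Lemma cs (I : finType) (P : pred I) (y : I -> R) :
  (\sum_(i in P) y i) ^+ 2 <= #|P|%:R * \sum_(i in P) y i ^+ 2.
Proof.
have H : 0 <= \sum_(i in P) \sum_(j in P) (y i - y j) ^+ 2.
  by apply: sumr_ge0 => i _; apply: sumr_ge0 => j _; apply: sqr_ge0.
have E : \sum_(i in P) \sum_(j in P) (y i - y j) ^+ 2 =
   2 * (#|P|%:R * \sum_(i in P) y i ^+ 2 - (\sum_(i in P) y i) ^+ 2).
  rewrite (eq_bigr (fun i => \sum_(j in P) (y i ^+2 + y j ^+ 2 - 2 * (y i * y j)))); last first.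
    by move=> i _; apply eq_bigr => j _; ring.
  under eq_bigr => i _ do rewrite sumrB big_split /= sumr_const -mulr_sumr -mulr_sumr.
  rewrite sumrB big_split /= sumr_const -!mulr_sumr -mulr_suml.
  set S2 := \sum_(i in P) y i ^+ 2; set S1 := \sum_(i in P) y i.
  have -> : \sum_(i in P) y i ^+ 2 *+ #|P| = S2 *+ #|P| by rewrite sumrMnl.
  rewrite -mulr_natl; ring.
by move: H; rewrite E pmulr_rge0 // subr_ge0.
Qed.

End LA.

Local Close Scope ring_scope.
Set Implicit Arguments. Unset Strict Implicit. Unset Printing Implicit Defensive.

Lemma colorable_n n (e : rel 'I_n) : irreflexive e -> colorable e n.
Proof.
move=> irr; apply/existsP; exists [ffun i => i].
apply/forallP => i; apply/forallP => j; apply/implyP => /andP[_ eij].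
rewrite !ffunE; apply/eqP => eq; move: eij; rewrite eq irr.
by [].
Qed.

Lemma chi_colorable n (e : rel 'I_n) : irreflexive e ->
  colorable e (chi e) /\ (chi e <= n)%N.
Proof.
move=> irr.
have h : has (colorable e) (iota 0 n.+1).
  by apply/hasP; exists n; [rewrite mem_iota; lia | exact: colorable_n].
have := nth_find 0%N h; have := h; rewrite has_find size_iota => lt.
rewrite nth_iota // add0n => col; split => //; lia.
Qed.

Lemma compl_irr n (e : rel 'I_n) : irreflexive (compl_graph e).
Proof. by move=> i; rewrite /compl_graph /= eqxx. Qed.

Lemma sum_lt c k : (\sum_(t < c) (t < k) = minn c k)%N.
Proof.
elim: c => [|c IH]; first by rewrite big_ord0 min0n.
rewrite big_ord_recr /= IH; case: (ltnP c k) => h /=; lia.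
Qed.

Section Grid.
Variables (n a c : nat) (e : rel 'I_n).
Variables (f : {ffun 'I_n -> 'I_c}) (g : {ffun 'I_n -> 'I_a}).
Hypotheses (fP : proper_on e [set: _]%SET f) (gP : proper_on (compl_graph e) [set: _]%SET g).
Hypothesis (Hn : n = (a * c)%N).

Lemma fE i j : e i j -> f i != f j.
Proof. by move=> eij; move/forallP: fP => /(_ i)/forallP/(_ j); rewrite !inE eij. Qed.

Lemma gE i j : g i = g j -> i != j -> e i j.
Proof.
move=> gij nij; move/forallP: gP => /(_ i)/forallP/(_ j); rewrite !inE /= /compl_graph /= nij /=.
by case: (e i j) => //=; rewrite gij eqxx.
Qed.

Lemma stable_le S : stable e S -> (#|S| <= a)%N.
Proof.
move=> st.
have inj : {in S &, injective g}.
  move=> i j iS jS gij; apply/eqP; apply: contraT => nij.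
  have := gE gij nij; move/forallP: st => /(_ i)/forallP/(_ j); rewrite iS jS /=.
  by move/negbTE => ->.
rewrite -(card_in_imset inj); apply: leq_trans (max_card _) _; by rewrite card_ord.
Qed.

Definition C t := [set i | f i == t].

Lemma C_stable t : stable e (C t).
Proof.
apply/forallP => i; apply/forallP => j; apply/implyP; rewrite !inE => /andP[/eqP fi /eqP fj].
by apply: contraL (eqxx t) => /fE; rewrite fi fj.
Qed.

Lemma cardC_sum t : #|C t| = (\sum_i (f i == t))%N.
Proof. by rewrite -sum1_card big_mkcond /=; apply eq_bigr => i _; rewrite inE; case: (f i == t). Qed.

Lemma sum_delta (i : 'I_n) : (\sum_(t : 'I_c) (f i == t) = 1)%N.
Proof.
rewrite (bigD1 (f i)) //= eqxx big1 // => t /negbTE; rewrite eq_sym => -> //.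
Qed.

Lemma sumC : (\sum_t #|C t| = n)%N.
Proof.
under eq_bigr => t _ do rewrite cardC_sum.
rewrite exchange_big /=.
under eq_bigr => i _ do rewrite sum_delta.
by rewrite sum_nat_const card_ord muln1.
Qed.

Lemma cardC t : #|C t| = a.
Proof.
have le t' : (#|C t'| <= a)%N by apply: stable_le; apply: C_stable.
have : (\sum_(t' : 'I_c) (a - #|C t'|) == 0)%N.
  by rewrite sumnB // sum_nat_const card_ord sumC Hn mulnC subnn.
rewrite sum_nat_eq0 => /forallP/(_ t) /=. have := le t. move: (#|C t|) => m h1 /eqP; lia.
Qed.

Lemma alphaE : (0 < c)%N -> alpha e = a.
Proof.
move=> c0; apply/eqP; rewrite eqn_leq; apply/andP; split.
  by apply/bigmax_leqP => S; apply: stable_le.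
rewrite -(cardC (Ordinal c0)); apply: (leq_bigmax_cond (C (Ordinal c0))).
exact: C_stable.
Qed.

Lemma sumS k : (k <= c)%N -> (\sum_i (f i < k) = k * a)%N.
Proof.
move=> kc.
transitivity (\sum_i \sum_(t : 'I_c) ((f i == t) * (t < k)))%N.
  apply eq_bigr => i _; rewrite (bigD1 (f i)) //= eqxx mul1n big1 ?addn0 //.
  by move=> t /negbTE; rewrite eq_sym => ->.
rewrite exchange_big /=.
transitivity (\sum_(t : 'I_c) (t < k) * a)%N.
  by apply eq_bigr => t _; rewrite -big_distrl /= -cardC_sum cardC // mulnC.
by rewrite -big_distrl /= sum_lt; congr (_ * _)%N; lia.
Qed.

Lemma cardS k : (k <= c)%N -> #|[set i | (f i < k)%N]| = (k * a)%N.
Proof.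
move=> kc; rewrite -(sumS kc) -sum1_card big_mkcond /=.
by apply eq_bigr => i _; rewrite inE; case: (f i < k)%N.
Qed.

Lemma alpha_kE k : (0 < k <= c)%N -> alpha_k e k = (k * a)%N.
Proof.
case/andP => k0 kc; apply/eqP; rewrite eqn_leq; apply/andP; split.
  apply/bigmax_leqP => S /existsP[h hP].
  have inj : {in S &, injective (fun i => (g i, h i))}.
    move=> i j iS jS [gij hij]; apply/eqP; apply: contraT => nij.
    have := gE gij nij; move/forallP: hP => /(_ i)/forallP/(_ j); rewrite iS jS /= => H eij.
    by move: (implyP H eij); rewrite hij eqxx.
  rewrite -(card_in_imset inj); apply: leq_trans (max_card _) _.
  by rewrite card_prod !card_ord mulnC.
case: k k0 kc => [//|k] _ kc.
rewrite -(cardS kc); apply: (leq_bigmax_cond [set i | (f i < k.+1)%N]).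
apply/existsP; exists [ffun i => inord (f i) : 'I_k.+1].
apply/forallP => i; apply/forallP => j; apply/implyP; rewrite !inE => /andP[/andP[fi fj] eij].
rewrite !ffunE; apply: contra (fE eij) => /eqP/(congr1 val); rewrite /= !inordK //.
by move=> h; apply/eqP/val_inj.
Qed.

End Grid.

Local Open Scope ring_scope.

Section Gen.
Variable R : realType.

Lemma sumd (T : finType) (x : T) : \sum_q ((x == q)%:R : R) = 1.
Proof.
rewrite (bigD1 x) //= eqxx big1 ?addr0 // => q /negbTE; rewrite eq_sym => -> //.
Qed.

Lemma sumdd (T : finType) (x y : T) :
  \sum_q ((x == q)%:R * (y == q)%:R : R) = (x == y)%:R.
Proof.
rewrite (bigD1 x) //= eqxx mul1r big1 ?addr0; first by rewrite eq_sym.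
by move=> q /negbTE; rewrite eq_sym => ->; rewrite mul0r.
Qed.

Lemma swap3 (I J K : finType) (H : I -> J -> K -> R) :
  \sum_i \sum_j \sum_k H i j k = \sum_k \sum_i \sum_j H i j k.
Proof. under eq_bigr => i _ do rewrite exchange_big. by rewrite exchange_big. Qed.

Lemma qfD n (A B : 'M[R]_n) (c : R) (x : 'cV[R]_n) :
  (x^T *m (A + c *: B) *m x) 0 0 = (x^T *m A *m x) 0 0 + c * (x^T *m B *m x) 0 0.
Proof. by rewrite mulmxDr mulmxDl -scalemxAr -scalemxAl !mxE. Qed.

Lemma qfB n (A B : 'M[R]_n) (x : 'cV[R]_n) :
  (x^T *m (A - B) *m x) 0 0 = (x^T *m A *m x) 0 0 - (x^T *m B *m x) 0 0.
Proof. by rewrite mulmxBr mulmxBl !mxE. Qed.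

Lemma qfZ n (B : 'M[R]_n) (c : R) (x : 'cV[R]_n) :
  (x^T *m (c *: B) *m x) 0 0 = c * (x^T *m B *m x) 0 0.
Proof. by rewrite -scalemxAr -scalemxAl !mxE. Qed.

Lemma qf1 n (x : 'cV[R]_n) :
  (x^T *m 1%:M *m x) 0 0 = \sum_i x i 0 ^+ 2.
Proof. by rewrite mulmx1 mxE; apply eq_bigr => i _; rewrite mxE expr2. Qed.

Lemma sum_filter_le (I : finType) (P : pred I) (G : I -> R) :
  (forall i, 0 <= G i) -> \sum_(i | P i) G i <= \sum_i G i.
Proof.
move=> G0; rewrite big_mkcond /=; apply: ler_sum => i _; case: (P i) => //.
Qed.

End Gen.

Section Upper.
Variables (R : realType) (n a : nat) (e : rel 'I_n) (g : {ffun 'I_n -> 'I_a}).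
Hypothesis gP : proper_on (compl_graph e) [set: _]%SET g.

Definition ind q : 'cV[R]_n := \col_i ((g i == q)%:R).

Lemma clique_qf (M : 'M[R]_n) q : zero_on_edges e M ->
  ((ind q)^T *m M *m ind q) 0 0 = \sum_i (g i == q)%:R * M i i.
Proof.
move=> zM; rewrite qfE; apply eq_bigr => i _.
rewrite (bigD1 i) //= big1 ?addr0.
  by rewrite !mxE; case: (g i == q); rewrite ?mul0r ?mul1r ?mulr1.
move=> j nji; rewrite !mxE.
case giq: (g i == q); case gjq: (g j == q); rewrite ?mul0r ?mulr0 //.
rewrite zM ?mulr0 ?mul0r //; apply: (gE gP); last by rewrite eq_sym.
by rewrite (eqP giq) (eqP gjq).
Qed.

Lemma sum_ind_diag (M : 'M[R]_n) :
  \sum_q \sum_i (g i == q)%:R * M i i = \tr M.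
Proof.
rewrite exchange_big /=; apply eq_bigr => i _.
by rewrite -mulr_suml sumd mul1r.
Qed.

Lemma diag_ind (Z : 'M[R]_n) q :
  \sum_i diagv Z i 0 * ind q i 0 = \sum_i (g i == q)%:R * Z i i.
Proof. by apply eq_bigr => i _; rewrite !mxE mulrC. Qed.

Lemma tr_bound (Z : 'M[R]_n) (kk : R) :
  (forall q, \sum_i (g i == q)%:R * Z i i <= kk) -> \tr Z <= a%:R * kk.
Proof.
move=> H; rewrite -sum_ind_diag.
apply: (@le_trans _ _ (\sum_(q : 'I_a) kk)); first by apply: ler_sum => q _; exact: H.
by rewrite sumr_const card_ord mulr_natl.
Qed.

Lemma up3 (kk : R) (Z : 'M[R]_n) : zero_on_edges e Z ->
  psd (border kk (diagv Z) Z) -> \tr Z <= a%:R * kk.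
Proof.
move=> zZ [_ pZ]; apply: tr_bound => q.
have := pZ (col_mx (const_mx (-1)) (ind q)).
rewrite borderE diag_ind clique_qf // mxE.
set s := \sum_i _; lra.
Qed.

Lemma up2 (kk : R) (Z X : 'M[R]_n) : 1 <= kk -> zero_on_edges e Z ->
  psd (Z - X) -> psd (border 1 (diagv Z) (Z + (kk - 1) *: X)) ->
  \tr Z <= a%:R * kk.
Proof.
move=> k1 zZ [_ pZX] [_ pB]; apply: tr_bound => q.
set s := \sum_i _.
have h1 := pZX (ind q); rewrite qfB clique_qf // -/s in h1.
set xq := ((ind q)^T *m X *m ind q) 0 0 in h1.
have := pB (col_mx (const_mx (-s)) (ind q)).
rewrite borderE diag_ind qfD clique_qf // mxE -/s -/xq => h2.
have h3 : 0 <= (kk - 1) * (s - xq) by apply: mulr_ge0; lra.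
nra.
Qed.

Lemma delta_sum i j :
  \sum_(q0 : 'I_a) \sum_(q1 : 'I_a)
    (((g i == q0)%:R - (g i == q1)%:R) * ((g j == q0)%:R - (g j == q1)%:R))
  = 2 * (a%:R * (g i == g j)%:R - 1) :> R.
Proof.
transitivity (\sum_(q0 : 'I_a) \sum_(q1 : 'I_a)
   ((g i == q0)%:R * (g j == q0)%:R - (g i == q0)%:R * (g j == q1)%:R
    - (g j == q0)%:R * (g i == q1)%:R + (g i == q1)%:R * (g j == q1)%:R : R)).
  by apply eq_bigr => q0 _; apply eq_bigr => q1 _; ring.
under eq_bigr => q0 _ do rewrite big_split sumrB sumrB /= sumr_const card_ord
   -!mulr_sumr !sumd sumdd.
rewrite big_split sumrB sumrB /= sumr_const card_ord.
have -> : \sum_(q < a) ((g i == q)%:R * (g j == q)%:R : R) *+ a = (g i == g j)%:R *+ a.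
  by rewrite sumrMnl sumdd.
under [X in _ - X - _ + _]eq_bigr => q _ do rewrite mulr1.
under [X in _ - _ - X + _]eq_bigr => q _ do rewrite mulr1.
rewrite !sumd -mulr_natr; ring.
Qed.

Lemma up1 (Z : 'M[R]_n) : zero_on_edges e Z -> psd Z ->
  sum_entries Z <= a%:R * \tr Z.
Proof.
move=> zZ [_ pZ].
pose x q0 q1 : 'cV[R]_n := ind q0 - ind q1.
have H : 0 <= \sum_q0 \sum_q1 ((x q0 q1)^T *m Z *m x q0 q1) 0 0.
  by apply: sumr_ge0 => q0 _; apply: sumr_ge0 => q1 _; apply: pZ.
have E : \sum_q0 \sum_q1 ((x q0 q1)^T *m Z *m x q0 q1) 0 0 =
   \sum_i \sum_j Z i j * (2 * (a%:R * (g i == g j)%:R - 1)).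
  under eq_bigr => q0 _ do under eq_bigr => q1 _ do rewrite qfE.
  rewrite swap3; apply eq_bigr => i _; rewrite swap3; apply eq_bigr => j _.
  rewrite -delta_sum mulr_sumr; apply eq_bigr => q0 _; rewrite mulr_sumr.
  by apply eq_bigr => q1 _; rewrite !mxE; ring.
have E2 : \sum_i \sum_j Z i j * (2 * (a%:R * (g i == g j)%:R - 1)) =
   2 * (a%:R * \tr Z - sum_entries Z).
  transitivity (\sum_i (2 * a%:R * Z i i - 2 * \sum_j Z i j)).
    apply eq_bigr => i _.
    transitivity (\sum_j (2 * a%:R * (Z i j * (g i == g j)%:R) - 2 * Z i j)).
      by apply eq_bigr => j _; ring.
    rewrite sumrB -!mulr_sumr; congr (_ * _ - _).
    rewrite (bigD1 i) //= eqxx mulr1 big1 ?addr0 // => j nji.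
    case gij: (g i == g j); rewrite ?mulr0 //.
    by rewrite zZ ?mul0r //; apply: (gE gP (eqP gij)); rewrite eq_sym.
  by rewrite sumrB -!mulr_sumr /sum_entries /mxtrace; ring.
move: H; rewrite E E2 pmulr_rge0 // subr_ge0 //.
Qed.
End Upper.

Lemma filt (R : realType) (I : finType) (P : pred I) (F : I -> R) :
  \sum_(i | P i) F i = \sum_i (P i)%:R * F i.
Proof. by rewrite big_mkcond; apply eq_bigr => i _; case: (P i); rewrite ?mul1r ?mul0r. Qed.

Section Lower.
Variables (R : realType) (n a c : nat) (e : rel 'I_n) (f : {ffun 'I_n -> 'I_c}) (k : nat).
Hypotheses (fP : proper_on e [set: _]%SET f) (a0 : (0 < a)%N) (kc : (k <= c)%N) (k0 : (0 < k)%N).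
Hypothesis cardCa : forall t, #|C f t| = a.
Hypothesis sumSk : (\sum_i (f i < k) = k * a)%N.

Definition bb i : R := ((f i < k)%N)%:R.
Definition sm i j : R := ((f i == f j) && (f i < k)%N)%:R.
Definition Z3 : 'M[R]_n := \matrix_(i, j) sm i j.
Definition Y (x : 'cV[R]_n) t := \sum_i (f i == t)%:R * x i 0.

Lemma sm_sum i j : sm i j = \sum_(t : 'I_c) (t < k)%N%:R * ((f i == t)%:R * (f j == t)%:R).
Proof.
rewrite (bigD1 (f i)) //= eqxx mul1r big1 ?addr0.
  by rewrite /sm eq_sym; case: (f j == f i); case: (f i < k)%N; rewrite ?mulr1 ?mulr0 ?mul1r ?mul0r.
by move=> t /negbTE; rewrite eq_sym => ->; rewrite !mul0r mulr0.
Qed.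

Lemma bb_sum i : bb i = \sum_(t : 'I_c) (t < k)%N%:R * (f i == t)%:R.
Proof.
rewrite (bigD1 (f i)) //= eqxx mulr1 big1 ?addr0 //.
by move=> t /negbTE; rewrite eq_sym => ->; rewrite mulr0.
Qed.

Lemma qfZ3 (x : 'cV[R]_n) : (x^T *m Z3 *m x) 0 0 = \sum_(t : 'I_c) (t < k)%N%:R * Y x t ^+ 2.
Proof.
rewrite qfE.
under eq_bigr => i _ do under eq_bigr => j _ do rewrite mxE sm_sum mulr_sumr mulr_suml.
rewrite swap3; apply eq_bigr => t _.
rewrite expr2 /Y mulr_suml mulr_sumr; apply eq_bigr => i _.
rewrite mulr_sumr mulr_sumr; apply eq_bigr => j _; ring.
Qed.

Lemma bbY (x : 'cV[R]_n) : \sum_i bb i * x i 0 = \sum_(t : 'I_c) (t < k)%N%:R * Y x t.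
Proof.
under eq_bigr => i _ do rewrite bb_sum mulr_suml.
rewrite exchange_big /=; apply eq_bigr => t _.
rewrite /Y mulr_sumr; apply eq_bigr => i _; ring.
Qed.

Lemma sum_ltR : \sum_(t : 'I_c) ((t < k)%N%:R : R) = k%:R.
Proof. by rewrite -natr_sum sum_lt; congr (_ %:R); lia. Qed.

Lemma card_lt : #|[pred t : 'I_c | (t < k)%N]| = k.
Proof.
rewrite -sum1_card big_mkcond /= -[RHS](_ : minn c k = k); last by lia.
by rewrite -sum_lt; apply eq_bigr => t _; rewrite inE; case: (t < k)%N.
Qed.

Lemma Ycs (x : 'cV[R]_n) (t : 'I_c) : Y x t ^+ 2 <= a%:R * \sum_i (f i == t)%:R * x i 0 ^+ 2.
Proof.
have := @cs R _ [pred i | f i == t] (fun i => x i 0).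
have -> : #|[pred i | f i == t]| = a.
  by rewrite -(cardCa t); apply: eq_card => i; rewrite !inE.
by rewrite [X in X ^+ 2 <= _]filt [X in _ <= _ * X]filt /Y.
Qed.

Lemma sum_Ysq (x : 'cV[R]_n) : \sum_(t : 'I_c) \sum_i (f i == t)%:R * x i 0 ^+ 2 = \sum_i x i 0 ^+ 2.
Proof.
rewrite exchange_big /=; apply eq_bigr => i _.
by rewrite -mulr_suml sumd mul1r.
Qed.

Lemma smii i : sm i i = bb i.
Proof. by rewrite /sm /bb eqxx. Qed.

Lemma rowsum i : \sum_j sm i j = bb i * a%:R.
Proof.
transitivity (\sum_j bb i * (f j == f i)%:R).
  by apply eq_bigr => j _; rewrite /sm /bb eq_sym; case: (f j == f i); case: (f i < k)%N;
     rewrite ?mulr1 ?mulr0.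
rewrite -mulr_sumr -(cardCa (f i)) cardC_sum natr_sum //.
Qed.

Lemma sum_bb : \sum_i bb i = (k * a)%:R.
Proof. by rewrite -sumSk natr_sum. Qed.

Lemma Z3_sym : symmx Z3.
Proof.
apply/matrixP => i j; rewrite !mxE /sm eq_sym.
by case: eqP => [->|].
Qed.

Lemma Z3_zero : zero_on_edges e Z3.
Proof. by move=> i j eij; rewrite mxE /sm (negbTE (fE fP eij)). Qed.

Lemma Z3_nonneg : nonneg_mx Z3.
Proof. by move=> i j; rewrite mxE ler0n. Qed.

Lemma tr_Z3 : \tr Z3 = (k * a)%:R.
Proof. by rewrite -sum_bb /mxtrace; apply eq_bigr => i _; rewrite mxE smii. Qed.

Lemma psd_Z3 : psd Z3.
Proof.
split; first exact: Z3_sym.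
by move=> x; rewrite qfZ3; apply: sumr_ge0 => t _; apply: mulr_ge0; rewrite ?ler0n ?sqr_ge0.
Qed.

Lemma sm_sym i j : sm i j = sm j i.
Proof. by rewrite /sm eq_sym; case: eqP => [->|]. Qed.

Lemma bb01 i : bb i = 0 \/ bb i = 1.
Proof. by rewrite /bb; case: (f i < k)%N; [right|left]. Qed.

Definition Zv : 'M[R]_n := a%:R^-1 *: Z3.

Lemma Zv_feas :
  [/\ symmx Zv, zero_on_edges e Zv, \tr Zv = k%:R, psd Zv & psd (1%:M - Zv)]
  /\ nonneg_mx Zv /\ sum_entries Zv = (k * a)%:R.
Proof.
have aR : (a%:R : R) != 0 by rewrite pnatr_eq0 -lt0n.
have aP : (0 : R) < a%:R by rewrite ltr0n.
have symZv : symmx Zv by apply/matrixP => i j; rewrite !mxE sm_sym.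
split; [split|split].
- exact: symZv.
- by move=> i j eij; rewrite mxE Z3_zero ?mulr0.
- rewrite /mxtrace; under eq_bigr => i _ do rewrite !mxE smii.
  by rewrite -mulr_sumr sum_bb natrM mulrCA mulVf // mulr1.
- split => // x; rewrite qfZ qfZ3; apply: mulr_ge0; first by rewrite invr_ge0 ler0n.
  by apply: sumr_ge0 => t _; apply: mulr_ge0; rewrite ?ler0n ?sqr_ge0.
- split.
    apply/matrixP => i j; rewrite !mxE sm_sym eq_sym //.
  move=> x; rewrite qfB qf1 qfZ qfZ3 subr_ge0.
  have h1 : \sum_(t : 'I_c) (t < k)%N%:R * Y x t ^+ 2 <= a%:R * \sum_i x i 0 ^+ 2.
    rewrite -(sum_Ysq x) mulr_sumr; apply: ler_sum => t _.
    apply: le_trans (Ycs x t); case: (t < k)%N; rewrite ?mul1r ?mul0r ?sqr_ge0 //.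
  rewrite -(ler_pM2l aP) mulrA mulfV // mul1r //.
- by move=> i j; rewrite mxE; apply: mulr_ge0; rewrite ?invr_ge0 ?ler0n // mxE ler0n.
- rewrite /sum_entries.
  under eq_bigr => i _ do under eq_bigr => j _ do rewrite !mxE.
  under eq_bigr => i _ do rewrite -mulr_sumr rowsum mulrCA mulVf // mulr1.
  exact: sum_bb.
Qed.

Lemma Z3_feas :
  [/\ symmx Z3, zero_on_edges e Z3, (forall i, Z3 i i <= 1), nonneg_mx Z3
    & psd (border k%:R (diagv Z3) Z3)] /\ \tr Z3 = (k * a)%:R.
Proof.
split; last exact: tr_Z3.
split.
- exact: Z3_sym.
- exact: Z3_zero.
- by move=> i; rewrite mxE smii; case: (bb01 i) => ->; lra.
- exact: Z3_nonneg.
split; first by apply: border_sym; apply: Z3_sym.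
move=> x; rewrite -(vsubmxK x) borderE.
set u := usubmx x 0 0; set y := dsubmx x.
have -> : \sum_i diagv Z3 i 0 * y i 0 = \sum_i bb i * y i 0.
  by apply eq_bigr => i _; rewrite !mxE smii.
rewrite bbY qfZ3 -sum_ltR mulr_suml mulr_sumr -!big_split /=.
apply: sumr_ge0 => t _.
have h1 := sqr_ge0 (u + Y y t).
have h2 : (0 : R) <= (t < k)%N%:R by rewrite ler0n.
nra.
Qed.

Definition X1 : 'M[R]_n := \matrix_(i, j) ((bb i * bb j - sm i j) / (k%:R - 1)).

Lemma kX1 i j : (k%:R - 1) * ((bb i * bb j - sm i j) / (k%:R - 1)) = bb i * bb j - sm i j.
Proof.
case: (boolP (k == 1)%N) => [/eqP k1|k1].
  rewrite k1 subrr mul0r /bb /sm k1.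
  case: (eqVneq (f i) (f j)) => [eqf|neqf].
    by rewrite eqf /=; case: (f j < 1)%N; rewrite /= ?mulr1 ?mulr0 subrr.
  case hi: (f i < 1)%N; case hj: (f j < 1)%N; rewrite /= ?mulr0 ?mul0r ?mulr1 ?subr0 //.
  by case/eqP: neqf; apply/val_inj; move: hi hj => /=; lia.
by rewrite mulrC divfK // subr_eq0 pnatr_eq1.
Qed.

Lemma W_entry i j : (Z3 + (k%:R - 1) *: X1) i j = bb i * bb j.
Proof. by rewrite !mxE kX1; ring. Qed.

Lemma X1_nonneg : nonneg_mx X1.
Proof.
move=> i j; rewrite mxE; apply: divr_ge0; last by rewrite subr_ge0 ler1n.
rewrite /bb /sm; case: eqP => [->|_] /=; case: (f j < k)%N; case: (f i < k)%N;
  rewrite /= ?mulr1 ?mulr0 ?subrr ?subr0 //; lra.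
Qed.

Lemma rank1 (x : 'cV[R]_n) :
  \sum_i \sum_j x i 0 * (bb i * bb j) * x j 0 = (\sum_i bb i * x i 0) ^+ 2.
Proof.
rewrite expr2 mulr_suml; apply eq_bigr => i _; rewrite mulr_sumr.
by apply eq_bigr => j _; ring.
Qed.

Lemma psd_ZX : psd (Z3 - X1).
Proof.
split.
  by apply/matrixP => i j; rewrite !mxE sm_sym [bb i * _]mulrC.
move=> x; rewrite qfB.
set S2 := (x^T *m Z3 *m x) 0 0.
set qX := (x^T *m X1 *m x) 0 0.
have S20 : 0 <= S2 by case: psd_Z3 => _ /(_ x).
case: (boolP (k == 1)%N) => [/eqP k1|k1].
  suff -> : qX = 0 by rewrite subr0.
  rewrite /qX qfE big1 // => i _; rewrite big1 // => j _.
  by rewrite mxE k1 subrr invr0 !mulr0 mul0r.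
have kP : (0 : R) < k%:R - 1 by rewrite subr_gt0 ltr1n; lia.
have E : (k%:R - 1) * qX = (\sum_i bb i * x i 0) ^+ 2 - S2.
  rewrite /qX /S2 !qfE mulr_sumr -rank1 -sumrB; apply eq_bigr => i _.
  rewrite mulr_sumr -sumrB; apply eq_bigr => j _.
  rewrite !mxE (_ : (k%:R - 1) * (x i 0 * ((bb i * bb j - sm i j) / (k%:R - 1)) * x j 0) = x i 0 * ((k%:R - 1) * ((bb i * bb j - sm i j) / (k%:R - 1))) * x j 0); last by ring.
  by rewrite kX1; ring.
have CS : (\sum_i bb i * x i 0) ^+ 2 <= k%:R * S2.
  rewrite bbY /S2 qfZ3.
  have := @cs R _ [pred t : 'I_c | (t < k)%N] (fun t => Y x t).
  rewrite card_lt [X in X ^+ 2 <= _]filt [X in _ <= _ * X]filt //.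
have : 0 <= (k%:R - 1) * (S2 - qX) by rewrite mulrBr E; lra.
by rewrite pmulr_rge0 // subr_ge0.
Qed.

Lemma X1_feas :
  [/\ symmx Z3, symmx X1, zero_on_edges e Z3 & (forall i, X1 i i = 0)]
  /\ [/\ nonneg_mx Z3, nonneg_mx X1, psd (Z3 - X1)
      & psd (border 1 (diagv Z3) (Z3 + (k%:R - 1) *: X1))]
  /\ [/\ (forall i j : 'I_n, (j < i)%N ->
            0 <= 1 - Z3 i i - Z3 j j + Z3 i j + (k%:R - 1) * X1 i j)
      & (forall i j : 'I_n, i != j -> 0 <= Z3 i i - Z3 i j - (k%:R - 1) * X1 i j)]
  /\ \tr Z3 = (k * a)%:R.
Proof.
split; [split|split; [split|split; [split|]]].
- exact: Z3_sym.
- by apply/matrixP => i j; rewrite !mxE sm_sym [bb i * _]mulrC.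
- exact: Z3_zero.
- by move=> i; rewrite mxE smii /bb; case: (f i < k)%N; rewrite /= ?mulr1 ?mulr0 subrr mul0r.
- exact: Z3_nonneg.
- exact: X1_nonneg.
- exact: psd_ZX.
- split.
    apply: border_sym; apply/matrixP => i j; rewrite mxE !W_entry mulrC //.
  move=> x; rewrite -(vsubmxK x) borderE.
  set u := usubmx x 0 0; set y := dsubmx x.
  have -> : \sum_i diagv Z3 i 0 * y i 0 = \sum_i bb i * y i 0.
    by apply eq_bigr => i _; rewrite !mxE smii.
  rewrite qfE [X in _ + X](eq_bigr (fun i => \sum_j y i 0 * (bb i * bb j) * y j 0)); last by move=> i _; apply eq_bigr => j _; rewrite W_entry.
  rewrite rank1; set P := \sum_i _.
  have := sqr_ge0 (u + P); lra.
- move=> i j _; rewrite !mxE kX1 !smii.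
  by case: (bb01 i) => ->; case: (bb01 j) => ->; lra.
- move=> i j _; rewrite !mxE kX1 !smii.
  by case: (bb01 i) => ->; case: (bb01 j) => ->; lra.
- exact: tr_Z3.
Qed.

End Lower.

Unset Implicit Arguments.

Theorem proposition1 (R : realType) (n : nat) (e : rel 'I_n) :
  simple_graph e ->
  n = (chi (compl_graph e) * chi e)%N ->
  forall k : nat, (1 <= k <= chi e)%N ->
    [/\ vartheta_k R e k = vartheta'_k R e k,
        vartheta'_k R e k = theta1_k R e k,
        theta1_k R e k = theta2_k R e k,
        theta2_k R e k = theta3_k R e k &
        theta3_k R e k = (k * alpha e)%:R] /\
    (k * alpha e)%N = alpha_k e k.
Proof.
move=> [esym eirr] Hn k /andP[k0 kc].
have [colc cn] := chi_colorable eirr.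
have [cola _] := chi_colorable (compl_irr e).
case/existsP: colc => f fP; case/existsP: cola => g gP.
move: f fP g gP kc Hn cn.
set a := chi (compl_graph e); set c := chi e => f fP g gP kc Hn cn.
have c0 : (0 < c)%N by lia.
have a0 : (0 < a)%N by move: cn; rewrite Hn; clearbody a c; nia.
have cardCa := cardC fP gP Hn.
have sumSk := sumS fP gP Hn kc.
have kk : (0 < k <= c)%N by rewrite k0 kc.
rewrite (alphaE fP gP Hn c0) (alpha_kE fP gP Hn kk).
have k1 : (1 : R) <= k%:R by rewrite ler1n.
have Hvt : vartheta_k R e k = (k * a)%:R.
  apply: sup_eq_max.
    have [[s z t p q] [_ se]] := Zv_feas R fP a0 cardCa sumSk.
    by exists (Zv R a f k); split => //; split.
  move=> y [Z [[sZ zZ tZ pZ pIZ] ->]].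
  by have := up1 gP zZ pZ; rewrite tZ natrM mulrC.
have Hvt' : vartheta'_k R e k = (k * a)%:R.
  apply: sup_eq_max.
    have [[s z t p q] [nn se]] := Zv_feas R fP a0 cardCa sumSk.
    by exists (Zv R a f k); split => //; split.
  move=> y [Z [[sZ zZ tZ pZ pIZ] [_ ->]]].
  by have := up1 gP zZ pZ; rewrite tZ natrM mulrC.
have Ht1 : theta1_k R e k = (k * a)%:R.
  apply: sup_eq_max.
    have [A [B [C' tr]]] := X1_feas R fP a0 kc k0 sumSk.
    by exists (Z3 R f k), (X1 R f k).
  move=> y [Z [X [[sZ sX zZ dX] [[nZ nX pZX pB] [_ ->]]]]].
  by have := up2 gP k1 zZ pZX pB; rewrite natrM mulrC.
have Ht2 : theta2_k R e k = (k * a)%:R.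
  apply: sup_eq_max.
    have [A [B [C' tr]]] := X1_feas R fP a0 kc k0 sumSk.
    by exists (Z3 R f k), (X1 R f k).
  move=> y [Z [X [[sZ sX zZ dX] [[nZ nX pZX pB] ->]]]].
  by have := up2 gP k1 zZ pZX pB; rewrite natrM mulrC.
have Ht3 : theta3_k R e k = (k * a)%:R.
  apply: sup_eq_max.
    have [A tr] := Z3_feas R fP a0 kc k0 sumSk.
    by exists (Z3 R f k).
  move=> y [Z [[sZ zZ dZ nZ pZ] ->]].
  by have := up3 gP zZ pZ; rewrite natrM mulrC.
by rewrite Hvt Hvt' Ht1 Ht2 Ht3.
Qed.
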